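(* Let $V\in(\mathbb{R}\cup\{-\infty\})^{n\times p}$ have no row and no column identically equal to $-\infty$. Then $$\operatorname{inrad}(\operatorname{Col}(V))=\max_J \operatorname{inrad}(\operatorname{Col}(V[J])),$$ where the maximum is taken over all subsets $J\subset[p]$ of cardinality $n$ (with the convention that the maximum is $0$ if $p<n$). Moreover, if the inner radius $\operatorname{inrad}(\operatorname{Col}(V))$ is positive, the maximum is achieved by some $J$ such that $\operatorname{Col}(V[J])$ is simplicial.
   Context: $\mathbb{R}_{\max}=\mathbb{R}\cup\{-\infty\}$. $V[J]$ is the submatrix of $V$ formed by the columns with indices in $J$. $\operatorname{Col}(W)=\{Wx\}$ is the tropical cone generated by the columns of $W$, with $(Wx)_i=\max_k(W_{ik}+x_k)$. Hilbert's projective metric: $d(x,y)=\inf\{\lambda-\mu:\lambda,\mu\in\mathbb{R},\ \mu+y_i\le x_i\le\lambda+y_i\ \forall i\}$; $B(a,r)=\{x:d(a,x)\le r\}$. $\operatorname{inrad}(\mathcal C)$ is the supremum of the radii of balls $B(a,r)$ with $a\in\mathbb{R}^n$ included in $\mathcal C$. A vector $u$ of a tropical cone $\mathcal C$ is extreme if $u=v\vee w$ ($\vee$ = entrywise max) with $v,w\in\mathcal C$ implies $u=v$ or $u=w$; a tropical cone in $\mathbb{R}_{\max}^n$ is simplicial if it has precisely $n$ extreme directions (sets $\{\lambda+u:\lambda\in\mathbb{R}_{\max}\}$ with $u$ extreme). *)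

(* Defs.v *)
From HB Require Import structures.
From mathcomp Require Import all_boot all_order all_algebra.
From mathcomp Require Import boolp classical_sets cardinality reals ereal.
Set Implicit Arguments. Unset Strict Implicit. Unset Printing Implicit Defensive.
Import Order.TTheory GRing.Theory Num.Theory.
Local Open Scope classical_set_scope.
Local Open Scope ring_scope.

(* The max-plus semiring R_max = R ∪ {-oo}: [None] is -oo, [Some r] is r. *)
Definition Rmax (R : realType) := option R.

Section Tropical.
Variable R : realType.

Definition rmax_le (a b : Rmax R) : bool :=
  match a, b with
  | None, _ => true
  | Some _, None => false
  | Some x, Some y => x <= y
  end.

Definition rmax_add (a b : Rmax R) : Rmax R :=
  match a, b with
  | None, _ => b
  | _, None => a
  | Some x, Some y => Some (Num.max x y)
  end.

Definition rmax_mul (a b : Rmax R) : Rmax R :=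
  match a, b with
  | Some x, Some y => Some (x + y)
  | _, _ => None
  end.

Definition vjoin n (v w : 'I_n -> Rmax R) : 'I_n -> Rmax R :=
  fun i => rmax_add (v i) (w i).

Definition vscale n (l : Rmax R) (u : 'I_n -> Rmax R) : 'I_n -> Rmax R :=
  fun i => rmax_mul l (u i).

Definition trop_mulv n q (W : 'M[Rmax R]_(n, q)) (x : 'I_q -> Rmax R) :
  'I_n -> Rmax R :=
  fun i => \big[rmax_add/None]_(k < q) rmax_mul (W i k) (x k).

Definition Col n q (W : 'M[Rmax R]_(n, q)) : set ('I_n -> Rmax R) :=
  [set y | exists x : 'I_q -> Rmax R, y = trop_mulv W x].

Definition subcols n p (V : 'M[Rmax R]_(n, p)) (J : {set 'I_p}) :
  'M[Rmax R]_(n, #|J|) :=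
  \matrix_(i < n, j < #|J|) V i (enum_val j).

Definition fin_vec n (a : 'I_n -> R) : 'I_n -> Rmax R := fun i => Some (a i).

Definition hilbert_dist n (x y : 'I_n -> Rmax R) : \bar R :=
  ereal_inf [set e : \bar R | exists lam mu : R,
     (forall i, rmax_le (rmax_mul (Some mu) (y i)) (x i) &&
                rmax_le (x i) (rmax_mul (Some lam) (y i))) /\
     e = ((lam - mu)%R)%:E].

Definition hball n (a : 'I_n -> R) (r : R) : set ('I_n -> Rmax R) :=
  [set x | (hilbert_dist (fin_vec a) x <= r%:E)%E].

Definition inrad n (C : set ('I_n -> Rmax R)) : \bar R :=
  ereal_sup [set e : \bar R | exists r : R,
     (exists a : 'I_n -> R, hball a r `<=` C) /\ e = r%:E].

Definition vzero n : 'I_n -> Rmax R := fun _ => None.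

Definition extreme n (C : set ('I_n -> Rmax R)) (u : 'I_n -> Rmax R) : Prop :=
  C u /\ u <> @vzero n /\
  forall v w, C v -> C w -> u = vjoin v w -> u = v \/ u = w.

Definition direction n (u : 'I_n -> Rmax R) : set ('I_n -> Rmax R) :=
  [set v | exists l : Rmax R, v = vscale l u].

Definition extreme_directions n (C : set ('I_n -> Rmax R)) :
    set (set ('I_n -> Rmax R)) :=
  [set D | exists u, extreme C u /\ D = direction u].

Definition simplicial n (C : set ('I_n -> Rmax R)) : Prop :=
  (extreme_directions C #= [set: 'I_n])%card.

End Tropical.

(* Main.v *)
Require Import Defs.
Set Warnings "-all".
From HB Require Import structures.
From mathcomp Require Import all_boot all_order all_algebra.
From mathcomp Require Import boolp classical_sets cardinality reals ereal.
From mathcomp Require Import lra.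
Set Implicit Arguments. Unset Strict Implicit. Unset Printing Implicit Defensive.
Import Order.TTheory GRing.Theory Num.Theory.
Local Open Scope classical_set_scope.
Local Open Scope ring_scope.

Lemma rmax_addA (R : realType) : associative (@rmax_add R).
Proof. by move=> [a|] [b|] [c|] //=; rewrite maxA. Qed.
Lemma rmax_addC (R : realType) : commutative (@rmax_add R).
Proof. by move=> [a|] [b|] //=; rewrite maxC. Qed.
Lemma rmax_add0 (R : realType) : left_id None (@rmax_add R).
Proof. by case. Qed.

HB.instance Definition _ (R : realType) :=
  Monoid.isComLaw.Build (Rmax R) None (@rmax_add R)
    (@rmax_addA R) (@rmax_addC R) (@rmax_add0 R).

Section Trop.
Variable R : realType.
Implicit Types a b c : Rmax R.

Lemma rle_refl a : rmax_le a a.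
Proof. by case: a => //= x. Qed.

Lemma rle_trans a b c : rmax_le a b -> rmax_le b c -> rmax_le a c.
Proof. by case: a => [x|]; case: b => [y|]; case: c => [z|] //=; apply: le_trans. Qed.

Lemma rle_anti a b : rmax_le a b -> rmax_le b a -> a = b.
Proof.
by case: a => [x|]; case: b => [y|] //= h1 h2; congr Some; apply/eqP; rewrite eq_le h1 h2.
Qed.

Lemma rle_addl a b : rmax_le a (rmax_add a b).
Proof. by case: a => [x|]; case: b => [y|] //=; rewrite /Order.max; case: ifP => [h|_]; [exact: ltW | exact: lexx]. Qed.

Lemma rle_addr a b : rmax_le b (rmax_add a b).
Proof. by rewrite rmax_addC rle_addl. Qed.

Lemma rle_lub a b c : rmax_le a c -> rmax_le b c -> rmax_le (rmax_add a b) c.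
Proof. by case: a => [x|]; case: b => [y|]; case: c => [z|] //= h1 h2; rewrite /Order.max; case: ifP. Qed.

Lemma radd_cases a b : rmax_add a b = a \/ rmax_add a b = b.
Proof.
case: a => [x|]; case: b => [y|] /=; try by [left|right].
by rewrite /Order.max; case: ifP; [right|left].
Qed.

Lemma rmul_none a : rmax_mul a None = None.
Proof. by case: a. Qed.

Lemma rmul_0 a : rmax_mul a (Some 0) = a.
Proof. by case: a => //= x; rewrite addr0. Qed.

Lemma rmulC a b : rmax_mul a b = rmax_mul b a.
Proof. by case: a => [x|]; case: b => [y|] //=; rewrite addrC. Qed.

Lemma rmulA a b c : rmax_mul a (rmax_mul b c) = rmax_mul (rmax_mul a b) c.
Proof. by case: a => [x|]; case: b => [y|]; case: c => [z|] //=; rewrite addrA. Qed.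

Lemma rmul_addr a b c : rmax_mul a (rmax_add b c) = rmax_add (rmax_mul a b) (rmax_mul a c).
Proof.
case: a => [x|]; case: b => [y|]; case: c => [z|] //=; congr Some.
by rewrite /Order.max ltrD2l; case: ifP.
Qed.

Section Big.
Variable q : nat.
Implicit Types F : 'I_q -> Rmax R.

Lemma big_lub F c : (forall m, rmax_le (F m) c) ->
  rmax_le (\big[@rmax_add R/None]_(m < q) F m) c.
Proof. by move=> h; apply: (big_ind (fun z => rmax_le z c)) => // x y; apply: rle_lub. Qed.

Lemma big_ub F m : rmax_le (F m) (\big[@rmax_add R/None]_(k < q) F k).
Proof. by rewrite (bigD1 m) //= rle_addl. Qed.

Lemma big_cases F : \big[@rmax_add R/None]_(k < q) F k = None \/
  exists m, \big[@rmax_add R/None]_(k < q) F k = F m.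
Proof.
apply: (big_ind (fun z => z = None \/ exists m, z = F m)); first by left.
  move=> x y hx hy; case: (radd_cases x y) => ->; by [].
by move=> i _; right; exists i.
Qed.

Lemma big_eq F c m : (forall k, rmax_le (F k) c) -> F m = c ->
  \big[@rmax_add R/None]_(k < q) F k = c.
Proof. by move=> h hm; apply: rle_anti; [apply: big_lub | rewrite -hm; apply: big_ub]. Qed.
End Big.

End Trop.
Section Cone.
Variable R : realType.
Variable n : nat.

Lemma col_ub q (W : 'M[Rmax R]_(n,q)) x i m :
  rmax_le (rmax_mul (W i m) (x m)) (trop_mulv W x i).
Proof. rewrite /trop_mulv; exact: (big_ub (fun k => rmax_mul (W i k) (x k))). Qed.

Definition good q (W : 'M[Rmax R]_(n,q)) (a : 'I_n -> R) (r : R)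
  (j : 'I_n -> 'I_q) (t : 'I_n -> R) :=
  (forall k, rmax_mul (W k (j k)) (Some (t k)) = Some (a k)) /\
  (forall k i, i != k -> rmax_le (rmax_mul (W i (j k)) (Some (t k))) (Some (a i - r))).

Definition vert (a : 'I_n -> R) (r : R) k : 'I_n -> Rmax R :=
  fun i => Some (if i == k then a k else a i - r).

Lemma vert_ball a r k : 0 <= r -> hball a r (vert a r k).
Proof.
move=> r0; rewrite /hball /=; apply: ge_ereal_inf.
exists (r - 0)%:E; last by rewrite subr0.
exists r, 0; split => // i; rewrite /vert /fin_vec /=.
by case: eqP => [->|_]; apply/andP; split; lra.
Qed.

Lemma extract q (W : 'M[Rmax R]_(n,q)) a r : 0 <= r -> hball a r `<=` Col W ->
  exists j t, good W a r j t.
Proof.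
move=> r0 hB.
have H : forall k, exists mt : 'I_q * R,
   rmax_mul (W k mt.1) (Some mt.2) = Some (a k) /\
   (forall i, i != k -> rmax_le (rmax_mul (W i mt.1) (Some mt.2)) (Some (a i - r))).
  move=> k; have [x hx] := hB _ (@vert_ball a r k r0).
  have hk : trop_mulv W x k = Some (a k) by rewrite -hx /vert eqxx.
  move: (hk); rewrite /trop_mulv.
  have [->//|[m ->]] := big_cases (fun m => rmax_mul (W k m) (x m)).
  case E: (x m) => [s|]; last by rewrite rmul_none.
  move=> hm; exists (m, s); split => // i ik.
  by have := col_ub W x i m; rewrite -hx /vert (negbTE ik) E.
have [f hf] := choice H.
exists (fun k => (f k).1), (fun k => (f k).2); split => k; [exact: (hf k).1 | exact: (hf k).2].
Qed.

Lemma good_inj q (W : 'M[Rmax R]_(n,q)) a r j t : 0 < r -> good W a r j t -> injective j.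
Proof.
move=> r0 [g1 g2] k l ejk; apply/eqP; apply/negPn/negP => kl.
have lk : l != k by rewrite eq_sym.
move: (g1 k) (g1 l) (g2 k l lk) (g2 l k kl); rewrite ejk.
case: (W k (j l)) => [wk|] //=; case: (W l (j l)) => [wl|] //= [e1] [e2] h1 h2.
lra.
Qed.

Lemma ball_in q (W : 'M[Rmax R]_(n,q)) a r j t : 0 < r -> good W a r j t ->
  hball a r `<=` Col W.
Proof.
move=> r0 G; have ij := good_inj r0 G; case: G => g1 g2.
move=> x; rewrite /hball /= => hx.
have hre : forall i, exists b, x i = Some b.
  move=> i; case E: (x i) => [b|]; first by exists b.
  exfalso; move: hx; apply/negP; rewrite -ltNge.
  apply: (@lt_le_trans _ _ +oo%E); first by rewrite ltry.
  apply: le_ereal_inf_tmp => e [lam [mu [h _]]].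
  by move: (h i); rewrite E /fin_vec /=.
have [b hb] := choice hre.
have xb : x = fin_vec b by apply: funext => i; rewrite hb.
have D : forall i k, (a i - b i) - (a k - b k) <= r.
  move=> i k; rewrite -lee_fin; apply: (le_trans _ hx).
  apply: le_ereal_inf_tmp => e [lam [mu [h ->]]]; rewrite lee_fin.
  move: (h i) (h k); rewrite !hb /fin_vec /= => /andP[_ hi] /andP[hk _]. lra.
pose y (m : 'I_q) : Rmax R :=
  if [pick k | j k == m] is Some k then Some (t k + (b k - a k)) else None.
exists y; rewrite xb; apply: funext => i; rewrite /trop_mulv /fin_vec.
symmetry; apply: (big_eq (m := j i)).
- move=> m; rewrite /y; case: pickP => [k /eqP <-|_]; last by rewrite rmul_none.
  case: (eqVneq i k) => [->|ik].
  + move: (g1 k); case: (W k (j k)) => [w|] //= [e]; lra.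
  + move: (g2 k i ik); case: (W i (j k)) => [w|] //= h; have := D i k; lra.
- rewrite /y; case: pickP => [k /eqP /ij ->|/(_ i)]; last by rewrite eqxx.
  move: (g1 i); case: (W i (j i)) => [w|] //= [e]; congr Some; lra.
Qed.

End Cone.
Section Simp.
Variable R : realType.
Variable n : nat.

Lemma col_closed q (W : 'M[Rmax R]_(n,q)) x y :
  vjoin (trop_mulv W x) (trop_mulv W y) = trop_mulv W (vjoin x y).
Proof.
apply: funext => i; rewrite /vjoin /trop_mulv -big_split /=.
by apply: eq_bigr => m _; rewrite rmul_addr.
Qed.

Lemma col_zero q (W : 'M[Rmax R]_(n,q)) : Col W (@vzero R n).
Proof.
exists (fun _ => None); apply: funext => i; rewrite /trop_mulv big1 // => m _.
by rewrite rmul_none.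
Qed.

Lemma col_term q (W : 'M[Rmax R]_(n,q)) x m : Col W (fun i => rmax_mul (W i m) (x m)).
Proof.
exists (fun k => if k == m then x m else None); apply: funext => i; rewrite /trop_mulv.
symmetry; apply: (big_eq (m:=m)); last by rewrite eqxx.
by move=> k; case: eqP => [->|_]; rewrite ?rmul_none ?rle_refl.
Qed.

Lemma big_vec q (F : 'I_q -> 'I_n -> Rmax R) (s : seq 'I_q) i :
  (\big[@vjoin R n/@vzero R n]_(m <- s) F m) i = \big[@rmax_add R/None]_(m <- s) F m i.
Proof. elim: s => [|m s IH]; first by rewrite !big_nil. by rewrite !big_cons /vjoin IH. Qed.

Lemma trop_big q (W : 'M[Rmax R]_(n,q)) x :
  trop_mulv W x = \big[@vjoin R n/@vzero R n]_(m < q) (fun i => rmax_mul (W i m) (x m)).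
Proof. by apply: funext => i; rewrite big_vec. Qed.

Lemma extreme_big q (C : set ('I_n -> Rmax R)) (F : 'I_q -> 'I_n -> Rmax R) u (s : seq 'I_q) :
  extreme C u -> (forall m, C (F m)) ->
  (forall v w, C v -> C w -> C (vjoin v w)) -> C (@vzero R n) ->
  u = \big[@vjoin R n/@vzero R n]_(m <- s) F m -> exists m, u = F m.
Proof.
move=> [Cu [u0 ext]] CF Cj C0; elim: s => [|m s IH]; first by rewrite big_nil => /u0.
rewrite big_cons => e.
have Cs : C (\big[@vjoin R n/@vzero R n]_(m <- s) F m).
  by elim: s {IH e} => [|m' s' IH']; rewrite ?big_nil ?big_cons //; apply: Cj.
by case: (ext _ _ (CF m) Cs e) => h; [exists m | exact: IH h].
Qed.

Lemma vscale_comp (l1 l2 : Rmax R) (c : 'I_n -> Rmax R) :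
  vscale l1 (vscale l2 c) = vscale (rmax_mul l1 l2) c.
Proof. by apply: funext => i; rewrite /vscale rmulA. Qed.

Lemma simp q (W : 'M[Rmax R]_(n,q)) a r j t : 0 < r -> good W a r j t ->
  (forall m, exists k, j k = m) -> simplicial (Col W).
Proof.
move=> r0 G surj; have ij := good_inj r0 G; case: G => g1 g2.
pose colv k : 'I_n -> Rmax R := fun i => W i (j k).
have colC : forall k, Col W (colv k).
  move=> k; have := col_term W (fun _ => Some 0) (j k).
  have -> : (fun i => rmax_mul (W i (j k)) (Some 0)) = colv k.
    by apply: funext => i; rewrite rmul_0.
  done.
have gk : forall k, exists ck, W k (j k) = Some ck /\ ck + t k = a k.
  by move=> k; move: (g1 k); case: (W k (j k)) => [c|] //= [e]; exists c.
have nz : forall k, colv k <> @vzero R n.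
  move=> k /(congr1 (fun f => f k)); rewrite /colv /vzero /=.
  by have [c [-> _]] := gk k.
have oneside : forall k v, Col W v -> (forall i, rmax_le (v i) (colv k i)) ->
    v k = colv k k -> v = colv k.
  move=> k v [x ->] hle hk.
  have [ck [eck eck2]] := gk k.
  have [E0|[m Em]] := big_cases (fun m => rmax_mul (W k m) (x m)).
    by move: hk; rewrite /trop_mulv E0 /colv eck.
  move: hk; rewrite /trop_mulv Em /colv eck.
  have [l <-] := surj m.
  case Ex: (x (j l)) => [s|]; last by rewrite rmul_none.
  case Ew: (W k (j l)) => [w|] //= [ews].
  have termle : forall i, rmax_le (rmax_mul (W i (j l)) (Some s)) (trop_mulv W x i).
    by move=> i; rewrite -Ex; apply: col_ub.
  case: (eqVneq l k) => [elk|lk].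
  - rewrite elk in Ew termle.
    have s0 : s = 0 by move: Ew; rewrite eck => -[ew]; lra.
    apply: funext => i; apply: rle_anti; first exact: hle.
    by have := termle i; rewrite s0 rmul_0.
  - exfalso.
    have [cl [ecl ecl2]] := gk l.
    have kl : k != l by rewrite eq_sym.
    move: (termle l) (hle l) (g2 k l lk) (g2 l k kl).
    rewrite ecl /colv Ew /=.
    case: (W l (j k)) => [z|] //=; case: (trop_mulv W x l) => [vl|] //= h1 h2 h3 h4.
    lra.
have extk : forall k, extreme (Col W) (colv k).
  move=> k; split; first exact: colC k. split; first exact: nz k.
  move=> v w Cv Cw e.
  have hk : colv k k = rmax_add (v k) (w k) by rewrite e.
  case: (radd_cases (v k) (w k)) => hvw; [left|right]; symmetry.
  - apply: (oneside k v Cv); last by rewrite hk hvw.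
    move=> i; rewrite e /vjoin; exact: rle_addl.
  - apply: (oneside k w Cw); last by rewrite hk hvw.
    move=> i; rewrite e /vjoin; exact: rle_addr.
have dirs : forall u, extreme (Col W) u -> exists k, direction u = direction (colv k).
  move=> u Eu; have [Cu [u0 _]] := Eu.
  case: Cu => x ex.
  have Cj : forall v w, Col W v -> Col W w -> Col W (vjoin v w).
    by move=> v w [x1 ->] [x2 ->]; rewrite col_closed; exists (vjoin x1 x2).
  have [m em] := extreme_big Eu (col_term W x) Cj (col_zero W) (etrans ex (trop_big W x)).
  case Ex: (x m) em => [s|] em; last first.
    by exfalso; apply: u0; rewrite em; apply: funext => i; rewrite rmul_none.
  have [l el] := surj m.
  exists l.
  have eu : u = vscale (Some s) (colv l).
    by rewrite em; apply: funext => i; rewrite /vscale /colv el rmulC.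
  apply/seteqP; split => v /= [l' ->].
    by exists (rmax_mul l' (Some s)); rewrite eu vscale_comp.
  exists (rmax_mul l' (Some (- s))).
  by rewrite eu vscale_comp -rmulA /= addNr rmul_0.
have dinj : forall k l, direction (colv k) = direction (colv l) -> k = l.
  move=> k l E; apply/eqP; apply/negPn/negP => kl.
  have : direction (colv k) (colv l).
    rewrite E; exists (Some 0); apply: funext => i; by rewrite /vscale rmulC rmul_0.
  move=> [l' el].
  have [ck [eck eck2]] := gk k; have [cl [ecl ecl2]] := gk l.
  have el_l := congr1 (fun f => f l) el; have el_k := congr1 (fun f => f k) el.
  have lk : l != k by rewrite eq_sym.
  move: el_l el_k (g2 k l lk) (g2 l k kl); rewrite /= /vscale /colv ecl eck.
  clear el; case: l' => [s|] //=; case: (W l (j k)) => [z|] //=; case: (W k (j l)) => [w|] //= [e1] [e2] h1 h2.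
  lra.
rewrite /simplicial.
have -> : extreme_directions (Col W) = (fun k => direction (colv k)) @` [set: 'I_n].
  apply/seteqP; split => D.
    move=> [u [Eu ->]]; have [k ek] := dirs u Eu; by exists k => //; rewrite ek.
  by move=> [k _ <-]; exists (colv k); split => //; exact: extk k.
by apply: inj_card_eq => k l _ _; exact: dinj.
Qed.

End Simp.
Lemma sup_ub (R : realType) (S : set (\bar R)) x : S x -> (x <= ereal_sup S)%E.
Proof. exact: ereal_sup_ubound. Qed.

Lemma inrad_ge0 (R : realType) n q (W : 'M[Rmax R]_(n,q)) : (0 <= inrad (Col W))%E.
Proof.
case: n W => [|n] W.
  apply: sup_ub; exists 0; split => //; exists (fun _ => 0) => x _.
  by exists (fun _ => None); apply: funext => -[m hm]; exfalso; move: (hm); rewrite ltn0.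
have key : forall r : R, r < 0 -> (r%:E <= inrad (Col W))%E.
  move=> r rlt; apply: sup_ub; exists r; split => //; exists (fun _ => 0) => x hx.
  exfalso; move: hx; rewrite /hball /= => hx.
  move: hx; set d := hilbert_dist _ _ => hx.
  have : (0%:E <= d)%E.
    apply: le_ereal_inf_tmp => e [lam [mu [h ->]]].
    move: (h ord0); rewrite /fin_vec; case: (x ord0) => [v|] /=; last by [].
    by move=> /andP[h1 h2]; rewrite lee_fin; lra.
  move=> h0; have := le_trans h0 hx; rewrite lee_fin; lra.
move: key; case: (inrad (Col W)) => [s| |] key.
- rewrite lee_fin leNgt; apply/negP => s0.
  have h2 : s / 2 < 0 by lra.
  have := key _ h2; rewrite lee_fin; lra.
- exact: leey.
- have h1 : (-1 : R) < 0 by lra.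
  by have := key _ h1; rewrite leeNy_eq.
Qed.

Lemma good_sub (R : realType) n p (V : 'M[Rmax R]_(n,p)) (J : {set 'I_p}) a r j t :
  good (subcols V J) a r j t -> good V a r (fun k => enum_val (j k)) t.
Proof.
case=> g1 g2; split => [k|k i ik]; [have := g1 k | have := g2 k i ik]; by rewrite /subcols mxE.
Qed.

Lemma good_sup (R : realType) n p (V : 'M[Rmax R]_(n,p)) a r j t : good V a r j t ->
  exists j', good (subcols V (j @: [set: 'I_n]%SET)) a r j' t.
Proof.
move=> [g1 g2].
have jJ : forall k, j k \in j @: [set: 'I_n]%SET by move=> k; by apply: imset_f; rewrite inE.
exists (fun k => enum_rank_in (jJ k) (j k)).
have E : forall i k, subcols V (j @: [set: 'I_n]%SET) i (enum_rank_in (jJ k) (j k)) = V i (j k).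
  by move=> i k; rewrite /subcols mxE (enum_rankK_in _ (jJ k)).
by split => [k|k i ik]; rewrite E; [exact: g1 | exact: g2].
Qed.

Theorem corollary3p9 (R : realType) (n p : nat) (V : 'M[Rmax R]_(n, p))
  (hrow : forall i : 'I_n, exists j : 'I_p, V i j <> None)
  (hcol : forall j : 'I_p, exists i : 'I_n, V i j <> None) :
  inrad (Col V) =
    (if (p < n)%N then 0%E
     else ereal_sup [set inrad (Col (subcols V J)) |
                     J in [set J : {set 'I_p} | #|J| = n]])
  /\ ((0 < inrad (Col V))%E ->
      exists J : {set 'I_p}, #|J| = n /\
        simplicial (Col (subcols V J)) /\
        inrad (Col V) = inrad (Col (subcols V J))).
Proof.
have sub : forall J : {set 'I_p}, (inrad (Col (subcols V J)) <= inrad (Col V))%E.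
  move=> J; apply: ge_ereal_sup => e [r [[a hB] ->]].
  case: (leP r 0) => r0.
    by apply: (le_trans _ (inrad_ge0 V)); rewrite lee_fin.
  have [j [t G]] := extract (ltW r0) hB.
  apply: sup_ub; exists r; split => //; exists a.
  exact: ball_in r0 (good_sub G).
have getJ : forall r a, 0 < r -> hball a r `<=` Col V ->
    exists J : {set 'I_p}, #|J| = n /\ hball a r `<=` Col (subcols V J).
  move=> r a r0 hB; have [j [t G]] := extract (ltW r0) hB.
  have ij := good_inj r0 G.
  have [j' G'] := good_sup G.
  exists (j @: [set: 'I_n]%SET); split; first by rewrite card_imset // cardsT card_ord.
  exact: ball_in r0 G'.
have posball : forall m q (W : 'M[Rmax R]_(m,q)), (0 < inrad (Col W))%E ->
    exists r a, 0 < r /\ hball a r `<=` Col W.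
  move=> m q W hpos.
  have [//|H] := pselect (exists r a, 0 < r /\ hball a r `<=` Col W).
  exfalso; move: hpos; apply/negP; rewrite -leNgt.
  apply: ge_ereal_sup => e [r [[a hB] ->]]; rewrite lee_fin leNgt; apply/negP => r0.
  by apply: H; exists r, a.
have part1 : inrad (Col V) = (if (p < n)%N then 0%E
     else ereal_sup [set inrad (Col (subcols V J)) |
                     J in [set J : {set 'I_p} | #|J| = n]]).
  case: ifPn => [pn|pn].
    apply/eqP; rewrite eq_le inrad_ge0 andbT.
    apply: ge_ereal_sup => e [r [[a hB] ->]]; rewrite lee_fin.
    rewrite leNgt; apply/negP => r0.
    have [j [t G]] := extract (ltW r0) hB.
    have := @leq_card _ _ j (good_inj r0 G); rewrite !card_ord => np.
    by rewrite ltnNge np in pn.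
  rewrite -leqNgt in pn.
  have J0 : exists J : {set 'I_p}, #|J| = n.
    exists (widen_ord pn @: [set: 'I_n]%SET); rewrite card_imset ?cardsT ?card_ord //.
    by move=> x y /(congr1 val) /= /val_inj.
  apply/eqP; rewrite eq_le; apply/andP; split.
    apply: ge_ereal_sup => e [r [[a hB] ->]].
    case: (leP r 0) => r0.
      have [J hJ] := J0.
      apply: (le_trans _ (@sup_ub _ _ (inrad (Col (subcols V J))) _)); last by exists J.
      by apply: (le_trans _ (inrad_ge0 _)); rewrite lee_fin.
    have [J [hJ hB']] := getJ r a r0 hB.
    apply: (le_trans _ (@sup_ub _ _ (inrad (Col (subcols V J))) _)); last by exists J.
    by apply: sup_ub; exists r; split => //; exists a.
  by apply: ge_ereal_sup => e [J _ <-]; exact: sub.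
split => // hpos.
have [rr0 [a0 [r00 hB0]]] := posball _ _ V hpos.
have [J0 [hJ0 _]] := getJ _ _ r00 hB0.
have np : (n <= p)%N by rewrite -hJ0; apply: (leq_trans (max_card _)); rewrite card_ord.
pose F (J : {set 'I_p}) := inrad (Col (subcols V J)).
have P0 : #|J0| == n by apply/eqP.
case: (arg_maxP (i0:=J0) (P:=fun J : {set 'I_p} => #|J| == n) F P0) => Js /eqP hJs hmax.
have eqJ : inrad (Col V) = F Js.
  apply/eqP; rewrite eq_le; apply/andP; split; last exact: sub.
  rewrite part1 ifN; last by rewrite -leqNgt.
  by apply: ge_ereal_sup => e [J hJ <-]; apply: hmax; apply/eqP.
exists Js; split => //; split; last exact: eqJ.
rewrite eqJ in hpos.
have [r [a [r0 hB]]] := posball _ _ _ hpos.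
have [j [t G]] := extract (ltW r0) hB.
have ij := good_inj r0 G.
apply: (simp r0 G) => m.
have hle : (#|'I_(#|Js|)| <= #|'I_n|)%N by rewrite !card_ord hJs.
have /codomP [k ->] := inj_card_onto ij hle m.
by exists k.
Qed.
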